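(* Let $P(X)=\prod_{i=1}^n(X-x_i)=\sum_{i=0}^n a_iX^i$ ($a_n=1$) and $G^{ij}=\Gamma_{\mathbb E}(a_i,a_j)$, $0\le i,j\le n-1$, regarded as polynomial functions of $(a_0,\dots,a_{n-1})$. Then on the set $\mathcal D$ of coefficient vectors of polynomials with $n$ distinct real roots: (1) $\mathrm{discr}(P)=\det(G^{ij})_{0\le i,j\le n-1}$; (2) for every $i\in\{0,\dots,n-1\}$, $\sum_j G^{ij}\,\partial_{a_j}\log\mathrm{discr}(P)=2\sum_j\partial_{a_j}G^{ij}$; (3) $\sum_{i,j}X^iG^{ij}\,\partial_{a_j}\log\mathrm{discr}(P)=-P''(X)$, i.e. $\Gamma_{\mathbb E}\big(P(X),\log\mathrm{discr}(P)\big)=-P''(X)$.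
   Context: $\Gamma_{\mathbb E}(f,g)=\sum_i\partial_{x_i}f\,\partial_{x_i}g$ on $\mathbb{R}^n$. For $P=\prod(X-x_i)$, $\mathrm{discr}(P)=\prod_{i<j}(x_i-x_j)^2$, a polynomial in the coefficients. $P''$ is the second derivative in $X$. *)

(* Defs.v *)
From Stdlib Require Import Reals Arith ClassicalEpsilon.
Open Scope R_scope.

Fixpoint fsum (n : nat) (f : nat -> R) : R :=
  match n with O => 0 | S m => fsum m f + f m end.
Fixpoint fprod (n : nat) (f : nat -> R) : R :=
  match n with O => 1 | S m => fprod m f * f m end.

(* coefx n x i = coefficient of X^i in prod_{k<n} (X - x_k) *)
Fixpoint coefx (n : nat) (x : nat -> R) (i : nat) : R :=
  match n with
  | O => if Nat.eqb i 0 then 1 else 0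
  | S m => (match i with O => 0 | S i' => coefx m x i' end) - x m * coefx m x i
  end.

(* the derivative of f : R -> R at t (chosen; meaningful where f is differentiable) *)
Definition deriv1 (f : R -> R) (t : R) : R :=
  epsilon (inhabits 0) (fun l => derivable_pt_lim f t l).

Definition upd (x : nat -> R) (k : nat) (t : R) : nat -> R :=
  fun i => if Nat.eqb i k then t else x i.

Definition pd (F : (nat -> R) -> R) (x : nat -> R) (k : nat) : R :=
  deriv1 (fun t => F (upd x k t)) (x k).

Definition GammaE (n : nat) (F H : (nat -> R) -> R) (x : nat -> R) : R :=
  fsum n (fun k => pd F x k * pd H x k).

(* x_0 < ... < x_{n-1} are the roots of X^n + sum_{i<n} a_i X^i *)
Definition is_ordered_roots (n : nat) (a x : nat -> R) : Prop :=
  (forall k, (S k < n)%nat -> x k < x (S k)) /\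
  (forall i, (i < n)%nat -> a i = coefx n x i).

Definition inD (n : nat) (a : nat -> R) : Prop := exists x, is_ordered_roots n a x.

Definition roots (n : nat) (a : nat -> R) : nat -> R :=
  epsilon (inhabits (fun _ => 0)) (is_ordered_roots n a).

(* G^{ij} = Gamma_E(a_i, a_j), as a function of the coefficients (on D) *)
Definition G (n i j : nat) (a : nat -> R) : R :=
  GammaE n (fun y => coefx n y i) (fun y => coefx n y j) (roots n a).

Definition discr (n : nat) (a : nat -> R) : R :=
  let x := roots n a in fprod n (fun j => fprod j (fun i => (x i - x j) ^ 2)).

Definition Peval (n : nat) (a : nat -> R) (X : R) : R :=
  X ^ n + fsum n (fun i => a i * X ^ i).

Fixpoint det (n : nat) (M : nat -> nat -> R) : R :=
  match n with
  | O => 1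
  | S m => fsum (S m) (fun j =>
      (-1) ^ j * M O j * det m (fun r c => M (S r) (if Nat.ltb c j then c else S c)))
  end.

(* Main.v *)
Require Import Defs.
From Stdlib Require Import Reals Arith ClassicalEpsilon Lra Lia FunctionalExtensionality.
From mathcomp Require Import all_boot all_algebra.
From mathcomp Require Import Rstruct.
Import Defs.
Open Scope R_scope.

Lemma fsum_ext n f g : (forall i, (i < n)%coq_nat -> f i = g i) -> fsum n f = fsum n g.
Proof.
elim: n => [|n IH] H //=; rewrite IH; first by rewrite H //; lia.
by move=> i Hi; apply H; lia.
Qed.
Lemma fprod_ext n f g : (forall i, (i < n)%coq_nat -> f i = g i) -> fprod n f = fprod n g.
Proof.
elim: n => [|n IH] H //=; rewrite IH; first by rewrite H //; lia.
by move=> i Hi; apply H; lia.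
Qed.
Lemma fsum_add n f g : fsum n (fun i => f i + g i) = fsum n f + fsum n g.
Proof. elim: n => [|n IH] /=; [ring| rewrite IH; ring]. Qed.
Lemma fsum_sub n f g : fsum n (fun i => f i - g i) = fsum n f - fsum n g.
Proof. elim: n => [|n IH] /=; [ring| rewrite IH; ring]. Qed.
Lemma fsum_opp n f : fsum n (fun i => - f i) = - fsum n f.
Proof. elim: n => [|n IH] /=; [ring| rewrite IH; ring]. Qed.
Lemma fsum_mull n c f : c * fsum n f = fsum n (fun i => c * f i).
Proof. elim: n => [|n IH] /=; [ring| rewrite -IH; ring]. Qed.
Lemma fsum_mulr n c f : fsum n f * c = fsum n (fun i => f i * c).
Proof. elim: n => [|n IH] /=; [ring| rewrite -IH; ring]. Qed.
Lemma fsum_zero n f : (forall i, (i < n)%coq_nat -> f i = 0) -> fsum n f = 0.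
Proof. move=> H; rewrite (fsum_ext n f (fun _ => 0)) //. elim: n {H} => //= n ->; ring. Qed.
Lemma fsum_swap n m f : fsum n (fun i => fsum m (fun j => f i j)) = fsum m (fun j => fsum n (fun i => f i j)).
Proof.
elim: n => [|n IH] /=; first by rewrite fsum_zero.
by rewrite IH -fsum_add.
Qed.
Lemma fsum_delta n k f : (k < n)%coq_nat -> fsum n (fun i => if Nat.eqb i k then f i else 0) = f k.
Proof.
elim: n => [|n IH] Hk /=; first lia.
case: (Nat.eq_dec k n) => [->|Hne].
  rewrite Nat.eqb_refl fsum_zero; first ring.
  move=> i Hi; case: (Nat.eqb_spec i n) => //; lia.
have -> : Nat.eqb n k = false by apply/Nat.eqb_neq; lia.
rewrite IH; [ring|lia].
Qed.
Lemma fsum_shift n f : fsum (S n) f = f O + fsum n (fun i => f (S i)).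
Proof. elim: n => [|n IH] /=; [ring|]. rewrite /= in IH; rewrite IH; ring. Qed.
Lemma fsum_lt q n f : (q <= n)%coq_nat -> fsum q f = fsum n (fun p => if Nat.ltb p q then f p else 0).
Proof.
elim: n => [|n IH] Hq /=.
  by have -> : q = O by lia.
case: (Nat.eq_dec q (S n)) => [->|Hne].
  have -> : Nat.ltb n (S n) = true by apply/Nat.ltb_lt; lia.
  rewrite (fsum_ext n (fun p => if Nat.ltb p (S n) then f p else 0) f) //.
  by move=> i Hi; have -> : Nat.ltb i (S n) = true by apply/Nat.ltb_lt; lia.
rewrite -IH; last lia.
have -> : Nat.ltb n q = false by apply/Nat.ltb_ge; lia.
ring.
Qed.
Lemma fprod_zero n f k : (k < n)%coq_nat -> f k = 0 -> fprod n f = 0.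
Proof.
elim: n => [|n IH] Hk Hf /=; first lia.
case: (Nat.eq_dec k n) => [<-|Hne]; first by rewrite Hf; ring.
rewrite IH //; [ring|lia].
Qed.
Lemma fprod_eq0 n f : fprod n f = 0 -> exists k, (k < n)%coq_nat /\ f k = 0.
Proof.
elim: n => [|n IH] /=; first lra.
move=> /Rmult_integral [/IH [k [Hk Hf]]|H]; [exists k; split=>//; lia|exists n; split=>//; lia].
Qed.
Lemma fprod_neq0 n f : (forall k, (k < n)%coq_nat -> f k <> 0) -> fprod n f <> 0.
Proof. move=> H /fprod_eq0 [k [Hk Hf]]; exact: H k Hk Hf. Qed.
Lemma fprod_pos n f : (forall k, (k < n)%coq_nat -> 0 < f k) -> 0 < fprod n f.
Proof.
elim: n => [|n IH] H /=; first lra.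
apply Rmult_lt_0_compat; [apply IH=> k Hk; apply H; lia| apply H; lia].
Qed.
Lemma fprod_skip n f l : (l < n)%coq_nat ->
  fprod n f = f l * fprod n (fun m => if Nat.eqb m l then 1 else f m).
Proof.
elim: n => [|n IH] Hl /=; first lia.
case: (Nat.eq_dec l n) => [->|Hne].
  rewrite Nat.eqb_refl (fprod_ext n _ f); first ring.
  move=> i Hi; case: (Nat.eqb_spec i n) => //; lia.
have -> : Nat.eqb n l = false by apply/Nat.eqb_neq; lia.
rewrite IH; [ring|lia].
Qed.
Lemma fsum_big n f : fsum n f = (\sum_(i < n) f (nat_of_ord i))%R.
Proof. elim: n => [|n IH] /=; first by rewrite big_ord0.
by rewrite big_ord_recr /= IH. Qed.
Lemma fprod_big n f : fprod n f = (\prod_(i < n) f (nat_of_ord i))%R.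
Proof. elim: n => [|n IH] /=; first by rewrite big_ord0.
by rewrite big_ord_recr /= IH. Qed.

Definition eqm (l : nat) : nat -> bool := fun m => Nat.eqb m l.
Definition addm (s : nat -> bool) (k : nat) : nat -> bool := fun m => s m || Nat.eqb m k.
Definition sh (f : nat -> R) (i : nat) : R := match i with O => 0 | S i' => f i' end.
Fixpoint cm (n : nat) (x : nat -> R) (s : nat -> bool) (i : nat) : R :=
  match n with
  | O => if Nat.eqb i 0 then 1 else 0
  | S m => if s m then cm m x s i else sh (cm m x s) i - x m * cm m x s i
  end.
Definition pe (n : nat) (x : nat -> R) (s : nat -> bool) (X : R) : R :=
  fprod n (fun m => if s m then 1 else X - x m).

Lemma coefx_cm n x i : coefx n x i = cm n x (fun _ => false) i.
Proof. elim: n i => [|n IH] i //=. case: i => [|i] /=; by rewrite ?IH. Qed.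

Lemma cm_hi n x s i : (n < i)%coq_nat -> cm n x s i = 0.
Proof.
elim: n i => [|n IH] i Hi /=.
  by case: i Hi => //; lia.
case: (s n); first by apply IH; lia.
rewrite IH; last lia. case: i Hi => [|i] Hi /=; first lia. rewrite IH; [ring|lia].
Qed.

Lemma cm_hi2 n x s i l : (l < n)%coq_nat -> s l = true -> (n <= i)%coq_nat -> cm n x s i = 0.
Proof.
elim: n i => [|n IH] i Hl Hs Hi /=; first lia.
case: (Nat.eq_dec l n) => [Hln|Hne].
  subst l; rewrite Hs; apply cm_hi; lia.
case: (s n); first by apply IH => //; lia.
rewrite IH //; try lia. case: i Hi => [|i] Hi /=; first lia. rewrite IH //; [ring|lia|lia].
Qed.

Lemma cm_ext_s n x s s' i : (forall m, (m < n)%coq_nat -> s m = s' m) -> cm n x s i = cm n x s' i.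
Proof.
elim: n i => [|n IH] i H //=.
rewrite H; last lia.
have H' : forall m, (m < n)%coq_nat -> s m = s' m by move=> m Hm; apply H; lia.
case: (s' n); first exact: IH.
case: i => [|i] /=; rewrite !(IH _ H') //.
Qed.

Lemma cm_ext_x n x y s i : (forall m, (m < n)%coq_nat -> x m = y m) -> cm n x s i = cm n y s i.
Proof.
elim: n i => [|n IH] i H //=.
have H' : forall m, (m < n)%coq_nat -> x m = y m by move=> m Hm; apply H; lia.
rewrite H; last lia.
case: (s n); first exact: IH.
case: i => [|i] /=; rewrite !(IH _ H') //.
Qed.

Lemma pe_ext_x n x y s X : (forall m, (m < n)%coq_nat -> x m = y m) -> pe n x s X = pe n y s X.
Proof. move=> H; apply fprod_ext => m Hm; by rewrite H. Qed.

Lemma fsum_S n f : fsum (S n) f = fsum n f + f n.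
Proof. by []. Qed.
Lemma cm_eval n x s X : fsum (S n) (fun i => cm n x s i * X ^ i) = pe n x s X.
Proof.
elim: n => [|n IH]; first by rewrite /= /pe /=; ring.
have -> : pe (S n) x s X = pe n x s X * (if s n then 1 else X - x n) by [].
case Hs: (s n).
  rewrite (fsum_ext _ _ (fun i => cm n x s i * X ^ i)); last by move=> i _; rewrite /= Hs.
  rewrite fsum_S IH (cm_hi n x s (S n)); [ring|lia].
rewrite (fsum_ext _ _ (fun i => sh (cm n x s) i * X ^ i - x n * (cm n x s i * X ^ i))); last first.
  by move=> i _; rewrite /= Hs; ring.
rewrite fsum_sub -fsum_mull fsum_shift.
rewrite (fsum_ext _ (fun i => sh (cm n x s) (S i) * X ^ (S i)) (fun i => X * (cm n x s i * X ^ i))); last by move=> * /=; ring.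
rewrite -fsum_mull (fsum_S (S n) (fun i => cm n x s i * X ^ i)) !IH (cm_hi n x s (S n)); last lia.
rewrite /=; ring.
Qed.

Lemma cm_eval_lt n x s X l : (l < n)%coq_nat -> s l = true ->
  fsum n (fun i => cm n x s i * X ^ i) = pe n x s X.
Proof.
move=> Hl Hs; rewrite -cm_eval /= (cm_hi2 n x s n l) //; ring.
Qed.

Lemma coefx_top n x : cm n x (fun _ => false) n = 1.
Proof.
elim: n => [|n IH] //=. rewrite IH cm_hi; [ring|lia].
Qed.

Lemma pe_skip n x s X l : (l < n)%coq_nat -> s l = false ->
  pe n x s X = (X - x l) * pe n x (addm s l) X.
Proof.
move=> Hl Hs; rewrite /pe (fprod_skip _ _ l Hl) Hs; congr (_ * _).
apply fprod_ext => m Hm; rewrite /addm.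
by case: (Nat.eqb m l); case: (s m).
Qed.

Lemma addm_comm l k : addm (eqm l) k = addm (eqm k) l.
Proof. apply functional_extensionality => m; rewrite /addm /eqm; by case: (Nat.eqb m l); case: (Nat.eqb m k). Qed.

Lemma deriv1_eq f t l : derivable_pt_lim f t l -> deriv1 f t = l.
Proof.
move=> H; rewrite /deriv1.
have H2 := epsilon_spec (inhabits 0) (fun l => derivable_pt_lim f t l) (ex_intro _ l H).
exact: uniqueness_limite _ _ _ _ H2 H.
Qed.

Lemma dl_eq f x l1 l2 : derivable_pt_lim f x l1 -> l1 = l2 -> derivable_pt_lim f x l2.
Proof. by move=> H <-. Qed.
Lemma dl_ext f g x l : (forall t, f t = g t) -> derivable_pt_lim g x l -> derivable_pt_lim f x l.
Proof. move=> H; have -> : f = g by apply functional_extensionality. done. Qed.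
Lemma dl_plus f g x l1 l2 : derivable_pt_lim f x l1 -> derivable_pt_lim g x l2 ->
  derivable_pt_lim (fun t => f t + g t) x (l1 + l2).
Proof. exact: derivable_pt_lim_plus. Qed.
Lemma dl_minus f g x l1 l2 : derivable_pt_lim f x l1 -> derivable_pt_lim g x l2 ->
  derivable_pt_lim (fun t => f t - g t) x (l1 - l2).
Proof. exact: derivable_pt_lim_minus. Qed.
Lemma dl_mult f g x l1 l2 : derivable_pt_lim f x l1 -> derivable_pt_lim g x l2 ->
  derivable_pt_lim (fun t => f t * g t) x (l1 * g x + f x * l2).
Proof. exact: derivable_pt_lim_mult. Qed.
Lemma dl_const c x : derivable_pt_lim (fun _ => c) x 0.
Proof. exact: derivable_pt_lim_const. Qed.
Lemma dl_id x : derivable_pt_lim (fun t => t) x 1.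
Proof. exact: derivable_pt_lim_id. Qed.

Lemma dl_local f g t0 l : (exists d, 0 < d /\ forall t, Rabs (t - t0) < d -> f t = g t) ->
  derivable_pt_lim g t0 l -> derivable_pt_lim f t0 l.
Proof.
move=> [d [Hd Hfg]] Hg eps Heps.
have [del Hdel] := Hg eps Heps.
have Hm : 0 < Rmin d del by apply Rmin_pos => //; apply cond_pos.
exists (mkposreal _ Hm) => h Hh Hhm /=.
rewrite !Hfg; first (apply Hdel => //; apply: Rlt_le_trans Hhm (Rmin_r _ _)).
- rewrite Rminus_diag Rabs_R0 //.
- have -> : t0 + h - t0 = h by ring. apply: Rlt_le_trans Hhm (Rmin_l _ _).
Qed.

Lemma fsum_deriv n F F' t0 : (forall m, (m < n)%coq_nat -> derivable_pt_lim (F m) t0 (F' m)) ->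
  derivable_pt_lim (fun t => fsum n (fun m => F m t)) t0 (fsum n F').
Proof.
elim: n => [|n IH] H /=; first exact: dl_const.
apply dl_plus; [apply IH => m Hm; apply H; lia| apply H; lia].
Qed.

Lemma fprod_deriv n F F' t0 : (forall m, (m < n)%coq_nat -> derivable_pt_lim (F m) t0 (F' m)) ->
  derivable_pt_lim (fun t => fprod n (fun m => F m t)) t0
    (fsum n (fun l => F' l * fprod n (fun m => if Nat.eqb m l then 1 else F m t0))).
Proof.
elim: n => [|n IH] H /=; first exact: dl_const.
apply: dl_eq; first (apply dl_mult; [apply IH => m Hm; apply H; lia| apply H; lia]).
rewrite Nat.eqb_refl fsum_mulr.
rewrite (fprod_ext n (fun m => if Nat.eqb m n then 1 else F m t0) (fun m => F m t0)); last first.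
  by move=> m Hm; case: (Nat.eqb_spec m n) => // ?; exfalso; lia.
congr (_ + _); last ring.
apply fsum_ext => l Hl.
have -> : Nat.eqb n l = false by apply/Nat.eqb_neq; lia.
ring.
Qed.

Lemma fprod_deriv_log n F F' t0 : (forall m, (m < n)%coq_nat -> derivable_pt_lim (F m) t0 (F' m)) ->
  (forall m, (m < n)%coq_nat -> F m t0 <> 0) ->
  derivable_pt_lim (fun t => fprod n (fun m => F m t)) t0
    (fprod n (fun m => F m t0) * fsum n (fun l => F' l / F l t0)).
Proof.
move=> H Hnz; apply: dl_eq; first exact: (fprod_deriv _ _ _ _ H).
rewrite fsum_mull; apply fsum_ext => l Hl.
rewrite (fprod_skip n (fun m => F m t0) l Hl). field. exact: Hnz.
Qed.

Lemma cm_deriv n Y Y' s t0 : (forall k, (k < n)%coq_nat -> derivable_pt_lim (fun t => Y t k) t0 (Y' k)) ->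
  forall i, derivable_pt_lim (fun t => cm n (Y t) s i) t0
    (fsum n (fun k => if s k then 0 else - Y' k * cm n (Y t0) (addm s k) i)).
Proof.
elim: n => [|n IH] HZ i /=; first exact: dl_const.
have HZ' : forall k, (k < n)%coq_nat -> derivable_pt_lim (fun t => Y t k) t0 (Y' k)
  by move=> k Hk; apply HZ; lia.
have Hext : forall k, (k < n)%coq_nat -> cm (S n) (Y t0) (addm s k) i =
   (if s n then cm n (Y t0) (addm s k) i else
    sh (cm n (Y t0) (addm s k)) i - Y t0 n * cm n (Y t0) (addm s k) i).
  move=> k Hk /=; rewrite /addm; have -> : Nat.eqb n k = false by apply/Nat.eqb_neq; lia.
  by rewrite orbF.
rewrite (fsum_ext n _ _ (fun k Hk => f_equal (fun v => if s k then 0 else - Y' k * v) (Hext k Hk))).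
case Hs: (s n).
  rewrite Rplus_0_r; apply: dl_eq; first exact: IH.
  apply fsum_ext => k Hk; by case: (s k).
have Hn : cm n (Y t0) (addm s n) i = cm n (Y t0) s i.
  apply cm_ext_s => m Hm; rewrite /addm; have -> : Nat.eqb m n = false by apply/Nat.eqb_neq; lia.
  by rewrite orbF.
rewrite Hn.
have Hsh : derivable_pt_lim (fun t => sh (cm n (Y t) s) i) t0
   (fsum n (fun k => if s k then 0 else - Y' k * sh (cm n (Y t0) (addm s k)) i)).
  case: i {Hext Hn} => [|i] /=.
    apply: dl_eq; first exact: dl_const.
    by rewrite fsum_zero // => k _; case: (s k) => //; ring.
  exact: IH.
apply: dl_eq; first (apply dl_minus; [exact: Hsh| apply dl_mult; [exact: HZ| exact: IH]]).
rewrite (fsum_ext n (fun k => if s k then 0 else - Y' k * (sh (cm n (Y t0) (addm s k)) i -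
   Y t0 n * cm n (Y t0) (addm s k) i))
  (fun k => (if s k then 0 else - Y' k * sh (cm n (Y t0) (addm s k)) i) -
            Y t0 n * (if s k then 0 else - Y' k * cm n (Y t0) (addm s k) i))); last first.
  by move=> k _; case: (s k); ring.
have -> : addm s n n = true by rewrite /addm Nat.eqb_refl orbT.
rewrite fsum_sub -fsum_mull; ring.
Qed.

Lemma dl_upd z l k t0 : derivable_pt_lim (fun t => upd z l t k) t0 (if Nat.eqb k l then 1 else 0).
Proof. rewrite /upd; case: (Nat.eqb k l); [exact: dl_id | exact: dl_const]. Qed.

Lemma upd_same z l : upd z l (z l) = z.
Proof. apply functional_extensionality => m; rewrite /upd; by case: (Nat.eqb_spec m l) => [->|]. Qed.

Lemma addm_ff k : addm (fun _ => false) k = eqm k.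
Proof. by apply functional_extensionality => m. Qed.

Lemma pd_coefx n z i l : (l < n)%coq_nat -> pd (fun y => coefx n y i) z l = - cm n z (eqm l) i.
Proof.
move=> Hl; rewrite /pd; apply deriv1_eq.
apply: (dl_ext _ (fun t => cm n (upd z l t) (fun _ => false) i)); first by move=> t; rewrite coefx_cm.
apply: dl_eq; first by apply: cm_deriv => k _; exact: dl_upd.
rewrite upd_same.
rewrite (fsum_ext n _ (fun k => if Nat.eqb k l then - cm n z (eqm k) i else 0)).
  by rewrite (fsum_delta n l (fun k => - cm n z (eqm k) i)).
move=> k _; rewrite addm_ff; case: (Nat.eqb k l); ring.
Qed.

Lemma G_formula n i j b : G n i j b =
  fsum n (fun l => cm n (roots n b) (eqm l) i * cm n (roots n b) (eqm l) j).
Proof.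
rewrite /G /GammaE; apply fsum_ext => l Hl; rewrite !pd_coefx //; ring.
Qed.

Lemma inc_lt n (x : nat -> R) : (forall k, (S k < n)%coq_nat -> x k < x (S k)) ->
  forall p q, (p < q)%coq_nat -> (q < n)%coq_nat -> x p < x q.
Proof.
move=> H p q Hpq; elim: q Hpq => [|q IH] Hpq Hq; first lia.
case: (Nat.eq_dec p q) => [->|Hne]; first (apply H; lia).
apply: Rlt_trans (IH _ _) (H _ _); lia.
Qed.
Lemma inc_le n (x : nat -> R) : (forall k, (S k < n)%coq_nat -> x k < x (S k)) ->
  forall p q, (p <= q)%coq_nat -> (q < n)%coq_nat -> x p <= x q.
Proof.
move=> H p q Hpq Hq; case: (Nat.eq_dec p q) => [->|Hne]; first lra.
apply Rlt_le; apply: (inc_lt n) => //; lia.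
Qed.

Lemma Peval_pe n a x : is_ordered_roots n a x -> forall X, Peval n a X = pe n x (fun _ => false) X.
Proof.
move=> [_ Ha] X; rewrite -cm_eval fsum_S coefx_top /Peval.
rewrite (fsum_ext n (fun i => a i * X ^ i) (fun i => cm n x (fun _ => false) i * X ^ i)); first ring.
by move=> i Hi; rewrite Ha // coefx_cm.
Qed.

Lemma Peval_upd n a j t X : (j < n)%coq_nat ->
  Peval n (upd a j t) X = Peval n a X + (t - a j) * X ^ j.
Proof.
move=> Hj; rewrite /Peval.
rewrite (fsum_ext n _ (fun i => a i * X ^ i + (if Nat.eqb i j then (t - a j) * X ^ i else 0))).
  by rewrite fsum_add (fsum_delta n j (fun i => (t - a j) * X ^ i)) //; ring.
move=> i _; rewrite /upd; case: (Nat.eqb_spec i j) => [->|_]; ring.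
Qed.

Lemma pe_root n x k : (k < n)%coq_nat -> pe n x (fun _ => false) (x k) = 0.
Proof. move=> Hk; apply: (fprod_zero _ _ k Hk); ring. Qed.

Lemma ordered_unique n b z w : is_ordered_roots n b z -> is_ordered_roots n b w ->
  forall k, (k < n)%coq_nat -> z k = w k.
Proof.
move=> Hz Hw.
have Hpe : forall X, pe n z (fun _ => false) X = pe n w (fun _ => false) X.
  by move=> X; rewrite -(Peval_pe _ _ _ Hz) -(Peval_pe _ _ _ Hw).
have Hin : forall (u v : nat -> R), (forall X, pe n u (fun _ => false) X = pe n v (fun _ => false) X) ->
    forall k, (k < n)%coq_nat -> exists m, (m < n)%coq_nat /\ v k = u m.
  move=> u v Huv k Hk.
  have := pe_root n v k Hk; rewrite -Huv => /fprod_eq0 [m [Hm Hf]].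
  exists m; split => //; lra.
have half : forall (u v : nat -> R), (forall k, (S k < n)%coq_nat -> u k < u (S k)) ->
    (forall k, (S k < n)%coq_nat -> v k < v (S k)) -> forall k, (k < n)%coq_nat ->
    (forall p, (p < k)%coq_nat -> u p = v p) -> (exists m, (m < n)%coq_nat /\ v k = u m) -> u k <= v k.
  move=> u v Hu Hv k Hk Hpk [m [Hm Hvm]].
  case: (Nat.lt_ge_cases m k) => Hmk.
    have := inc_lt n v Hv m k Hmk Hk; rewrite -Hpk // -Hvm; lra.
  rewrite Hvm; exact: inc_le n u Hu k m Hmk Hm.
have main : forall k, forall p, (p < k)%coq_nat -> (p < n)%coq_nat -> z p = w p.
  elim => [|k IH] p Hp Hpn; first lia.
  case: (Nat.eq_dec p k) => [Hpk|Hne]; last (apply IH => //; lia).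
  subst p.
  apply Rle_antisym.
    apply: (half z w (proj1 Hz) (proj1 Hw) k Hpn); first (move=> q Hq; apply IH => //; lia).
    exact: (Hin z w Hpe k Hpn).
  apply: (half w z (proj1 Hw) (proj1 Hz) k Hpn); first (move=> q Hq; symmetry; apply IH => //; lia).
  exact: (Hin w z (fun X => esym (Hpe X)) k Hpn).
move=> k Hk; apply: (main (S k)) => //; lia.
Qed.

Lemma pow_expr (x : R) k : x ^ k = (x ^+ k)%R.
Proof. elim: k => [|k IH] //=. by rewrite GRing.exprS IH. Qed.

Lemma poly_zero n (z d : nat -> R) :
  (forall p q, (p < q)%coq_nat -> (q < n)%coq_nat -> z p < z q) ->
  (forall k, (k < n)%coq_nat -> fsum n (fun i => d i * z k ^ i) = 0) ->
  forall i, (i < n)%coq_nat -> d i = 0.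
Proof.
move=> Hz Hr i Hi.
pose p : {poly R} := (\poly_(i < n) d i)%R.
pose rs := [seq z k | k <- iota 0 n].
have Hroot : all (root p) rs.
  apply/allP => y /mapP [k Hk ->]; rewrite mem_iota add0n in Hk.
  have Hk' : (k < n)%coq_nat by apply/ltP.
  apply/eqP; rewrite horner_poly; apply: (etrans _ (Hr k Hk')).
  rewrite fsum_big; apply: eq_bigr => m _; by rewrite pow_expr.
have Huniq : uniq rs.
  rewrite map_inj_in_uniq ?iota_uniq // => k1 k2; rewrite !mem_iota !add0n => H1 H2 Heq.
  apply/eqP; case: (ltngtP k1 k2) => // H.
  - have := Hz k1 k2 (ltP H) (ltP H2); rewrite Heq; lra.
  - have := Hz k2 k1 (ltP H) (ltP H1); rewrite Heq; lra.
have Hp0 : p = 0%R.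
  apply: (roots_geq_poly_eq0 Hroot Huniq).
  by rewrite size_map size_iota size_poly.
have := congr1 (fun q : {poly R} => (q`_i)%R) Hp0.
rewrite coef_poly /=; case: ltnP => [_|]; last by move/leP; lia.
by rewrite polyseq0 nth_nil.
Qed.

Lemma roots_of n c z :
  (forall k, (S k < n)%coq_nat -> z k < z (S k)) ->
  (forall k, (k < n)%coq_nat -> Peval n c (z k) = 0) -> is_ordered_roots n c z.
Proof.
move=> Hz Hr; split => // i Hi.
have H := poly_zero n z (fun i => c i - coefx n z i) (inc_lt n z Hz).
apply: Rminus_diag_uniq; apply: H => // k Hk.
have := Hr k Hk; have := pe_root n z k Hk; rewrite -cm_eval fsum_S coefx_top /Peval.
rewrite (fsum_ext n (fun i => (c i - coefx n z i) * z k ^ i)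
  (fun i => c i * z k ^ i - cm n z (fun _ => false) i * z k ^ i)).
  rewrite fsum_sub; lra.
by move=> m _; rewrite coefx_cm; ring.
Qed.

Lemma cont_of_dl f : (forall X, exists l, derivable_pt_lim f X l) -> continuity f.
Proof. move=> H X; have [l Hl] := H X; exact: (derivable_continuous_pt f X (exist _ l Hl)). Qed.

Lemma dl_pow X i : exists l, derivable_pt_lim (fun Y => Y ^ i) X l.
Proof. eexists; exact: derivable_pt_lim_pow. Qed.

Lemma Peval_dl n b X : exists l, derivable_pt_lim (fun Y => Peval n b Y) X l.
Proof.
eexists; rewrite /Peval; apply dl_plus; first exact: derivable_pt_lim_pow.
apply: (fsum_deriv n (fun i Y => b i * Y ^ i)) => m _.
have := dl_mult (fun _ => b m) (fun Y => Y ^ m) X _ _ (dl_const (b m) X) (derivable_pt_lim_pow X m).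
exact.
Qed.

Lemma pe_dl n x s X : exists l, derivable_pt_lim (fun Y => pe n x s Y) X l.
Proof.
eexists; rewrite /pe; apply: (fprod_deriv n (fun m Y => if s m then 1 else Y - x m)
   (fun m => if s m then 0 else 1)) => m _.
case: (s m); first exact: dl_const.
apply: dl_eq; first exact: (dl_minus _ _ _ _ _ (dl_id X) (dl_const (x m) X)). ring.
Qed.

Lemma fin_min N (f : nat -> R) : (forall k, (k < N)%coq_nat -> 0 < f k) ->
  exists m, 0 < m /\ forall k, (k < N)%coq_nat -> m <= f k.
Proof.
elim: N => [|N IH] H; first by exists 1; split; [lra| move=> k Hk; lia].
have [m [Hm Hmk]] : exists m, 0 < m /\ forall k, (k < N)%coq_nat -> m <= f k by apply IH => k Hk; apply H; lia.
exists (Rmin m (f N)); split; first (apply Rmin_pos => //; apply H; lia).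
move=> k Hk; case: (Nat.eq_dec k N) => [->|Hne]; first exact: Rmin_r.
apply: Rle_trans (Rmin_l _ _) (Hmk _ _); lia.
Qed.

Lemma fin_max N (f : nat -> R) : exists B, 0 < B /\ forall k, (k < N)%coq_nat -> f k <= B.
Proof.
elim: N => [|N [B [HB HBk]]]; first by exists 1; split; [lra| move=> k Hk; lia].
exists (Rmax B (f N)); split; first (apply: Rlt_le_trans HB (Rmax_l _ _)).
move=> k Hk; case: (Nat.eq_dec k N) => [->|Hne]; first exact: Rmax_r.
apply: Rle_trans (HBk _ _) (Rmax_l _ _); lia.
Qed.

Lemma fprod_mul n f g : fprod n f * fprod n g = fprod n (fun m => f m * g m).
Proof. elim: n => [|n IH] /=; [ring| rewrite -IH; ring]. Qed.

Lemma roots_spec n b : inD n b -> is_ordered_roots n b (roots n b).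
Proof. move=> [z Hz]; rewrite /roots; exact: (epsilon_spec _ _ (ex_intro _ z Hz)). Qed.

Lemma roots_eq n a x : is_ordered_roots n a x -> forall k, (k < n)%coq_nat -> roots n a k = x k.
Proof. move=> Hx; apply: ordered_unique (roots_spec _ _ (ex_intro _ x Hx)) Hx. Qed.

Lemma gap_exists n (x : nat -> R) : (forall k, (S k < n)%coq_nat -> x k < x (S k)) ->
  exists g, 0 < g /\ forall p q, (p < q)%coq_nat -> (q < n)%coq_nat -> g <= x q - x p.
Proof.
move=> Hx.
have [g [Hg Hk]] := fin_min (Nat.pred n) (fun k => x (S k) - x k)
  (fun k Hk => ltac:(have := Hx k ltac:(lia); lra)).
exists g; split => // p q Hpq Hq.
have := Hk p ltac:(lia); have := inc_le n x Hx (S p) q ltac:(lia) Hq; lra.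
Qed.

Lemma prod_pos_sep d e : 0 < e -> e < Rabs d -> 0 < (d - e) * (d + e).
Proof.
move=> He; case: (Rle_lt_dec 0 d) => Hd.
  rewrite Rabs_pos_eq // => H; apply Rmult_lt_0_compat; lra.
rewrite Rabs_left // => H.
have -> : (d - e) * (d + e) = (- (d - e)) * (- (d + e)) by ring.
apply Rmult_lt_0_compat; lra.
Qed.

Lemma pe_sign n x k e : (k < n)%coq_nat -> 0 < e ->
  (forall m, (m < n)%coq_nat -> m <> k -> e < Rabs (x k - x m)) ->
  pe n x (fun _ => false) (x k - e) * pe n x (fun _ => false) (x k + e) < 0.
Proof.
move=> Hk He Hg.
rewrite (pe_skip n x (fun _ => false) (x k - e) k Hk) // (pe_skip n x (fun _ => false) (x k + e) k Hk) // !addm_ff.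
have Hpos : 0 < pe n x (eqm k) (x k - e) * pe n x (eqm k) (x k + e).
  rewrite /pe fprod_mul; apply fprod_pos => m Hm; rewrite /eqm.
  case: (Nat.eqb_spec m k) => [_|Hne]; first by rewrite Rmult_1_r; apply Rlt_0_1.
  have -> : (x k - e - x m) * (x k + e - x m) = (x k - x m - e) * (x k - x m + e) by ring.
  exact: prod_pos_sep (Hg m Hm Hne).
have -> : (x k - e - x k) * pe n x (eqm k) (x k - e) * ((x k + e - x k) * pe n x (eqm k) (x k + e))
   = - ((e * e) * (pe n x (eqm k) (x k - e) * pe n x (eqm k) (x k + e))) by ring.
apply Ropp_lt_gt_0_contravar. apply Rmult_lt_0_compat => //; exact: Rmult_lt_0_compat.
Qed.

Lemma same_sign p h : Rabs h < Rabs p -> 0 < (p + h) * p.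
Proof.
move=> H; have [h1 h2] := Rabs_def2 _ _ H.
case: (Rle_lt_dec 0 p) => Hp.
  rewrite Rabs_pos_eq // in h1 h2; apply Rmult_lt_0_compat; lra.
rewrite Rabs_left // in h1 h2.
have -> : (p + h) * p = (-(p + h)) * (- p) by ring.
apply Rmult_lt_0_compat; lra.
Qed.
Lemma neg_of_prod u v : 0 < u * v -> v < 0 -> u < 0.
Proof.
move=> H Hv; case: (Rlt_le_dec u 0) => // Hu.
have := Rmult_le_compat_l u v 0 Hu (Rlt_le _ _ Hv); rewrite Rmult_0_r; lra.
Qed.
Lemma sign_transfer A A' B B' : 0 < A * A' -> 0 < B * B' -> A' * B' < 0 -> A * B < 0.
Proof.
move=> H1 H2 H3.
have H4 : 0 < (A * B) * (A' * B') by (have -> : A * B * (A' * B') = (A * A') * (B * B') by ring); apply Rmult_lt_0_compat.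
exact: neg_of_prod H4 H3.
Qed.

Lemma perturb n a x j : is_ordered_roots n a x -> (j < n)%coq_nat ->
  forall eps, 0 < eps -> exists del, 0 < del /\ forall t, Rabs (t - a j) < del ->
  is_ordered_roots n (upd a j t) (roots n (upd a j t)) /\
  forall k, (k < n)%coq_nat -> Rabs (roots n (upd a j t) k - x k) < eps.
Proof.
move=> Hx Hj eps Heps.
have [g [Hg Hgap]] := gap_exists n x (proj1 Hx).
pose e := Rmin (eps / 2) (g / 3).
have He : 0 < e by apply Rmin_pos; lra.
have He1 : e <= eps / 2 by apply Rmin_l.
have He2 : e <= g / 3 by apply Rmin_r.
have Hsep : forall k m, (k < n)%coq_nat -> (m < n)%coq_nat -> m <> k -> e < Rabs (x k - x m).
  move=> k m Hk Hm Hne; case: (Nat.lt_ge_cases m k) => H.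
    have := Hgap m k H Hk; split_Rabs; lra.
  have := Hgap k m ltac:(lia) Hm; split_Rabs; lra.
pose P := pe n x (fun _ => false).
have Hsg : forall k, (k < n)%coq_nat -> P (x k - e) * P (x k + e) < 0.
  move=> k Hk; apply pe_sign => // m Hm Hne; exact: Hsep.
have [M [HM HMk]] := fin_min n (fun k => Rmin (Rabs (P (x k - e))) (Rabs (P (x k + e))))
  (fun k Hk => ltac:(have := Hsg k Hk; move=> H; apply Rmin_pos; apply Rabs_pos_lt => H0;
                      rewrite H0 in H; lra)).
have [B [HB HBk]] := fin_max n (fun k => Rmax (Rabs ((x k - e) ^ j)) (Rabs ((x k + e) ^ j))).
exists (M / B); split; first by apply Rdiv_lt_0_compat.
move=> t Ht.
pose b := upd a j t.
have Hpert : forall Y, Rabs (Y ^ j) <= B -> M <= Rabs (P Y) -> 0 < Peval n b Y * P Y.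
  move=> Y HY HPY; rewrite /b Peval_upd // (Peval_pe _ _ _ Hx).
  apply same_sign; rewrite Rabs_mult.
  have : Rabs (t - a j) * Rabs (Y ^ j) <= Rabs (t - a j) * B by apply Rmult_le_compat_l => //; apply Rabs_pos.
  have : Rabs (t - a j) * B < M.
    have := Rmult_lt_compat_r B _ _ HB Ht; rewrite /Rdiv Rmult_assoc Rinv_l; first lra.
    apply Rgt_not_eq; exact HB.
  rewrite /P in HPY *; lra.
have Hsgb : forall k, (k < n)%coq_nat -> Peval n b (x k - e) * Peval n b (x k + e) < 0.
  move=> k Hk; apply: (sign_transfer _ (P (x k - e)) _ (P (x k + e))); last exact: Hsg.
  - apply Hpert; [apply: Rle_trans (Rmax_l _ _) (HBk k Hk)| apply: Rle_trans (HMk k Hk) (Rmin_l _ _)].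
  - apply Hpert; [apply: Rle_trans (Rmax_r _ _) (HBk k Hk)| apply: Rle_trans (HMk k Hk) (Rmin_r _ _)].
have Hcont : continuity (fun Y => Peval n b Y) by apply cont_of_dl => Y; exact: Peval_dl.
pose Q k y := x k - e <= y <= x k + e /\ Peval n b y = 0.
pose z k := epsilon (inhabits 0) (Q k).
have Hz : forall k, (k < n)%coq_nat -> Q k (z k).
  move=> k Hk; apply epsilon_spec.
  have [y Hy] := IVT_cor _ (x k - e) (x k + e) Hcont ltac:(lra) (Rlt_le _ _ (Hsgb k Hk)).
  by exists y.
have Hzinc : forall k, (S k < n)%coq_nat -> z k < z (S k).
  move=> k Hk; have [[_ H1] _] := Hz k ltac:(lia); have [[H2 _] _] := Hz (S k) Hk.
  have := Hgap k (S k) ltac:(lia) Hk; lra.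
have Hzr : is_ordered_roots n b z by apply roots_of => // k Hk; exact: (proj2 (Hz k Hk)).
have Hrb := roots_spec n b (ex_intro _ z Hzr).
split => // k Hk.
rewrite (ordered_unique n b _ _ Hrb Hzr k Hk).
have [[H1 H2] _] := Hz k Hk; split_Rabs; lra.
Qed.

Lemma cont_eps f x0 : continuity_pt f x0 -> forall eps, 0 < eps ->
  exists eta, 0 < eta /\ forall y, Rabs (y - x0) < eta -> Rabs (f y - f x0) < eps.
Proof.
move=> H eps Heps; have [eta [Heta Hf]] := H eps Heps.
exists eta; split => // y Hy.
case: (Req_dec x0 y) => [<-|Hne]; first by rewrite Rminus_diag Rabs_R0.
exact: (Hf y (conj (conj I Hne) Hy)).
Qed.

Lemma cont_dl f x0 : (exists l, derivable_pt_lim f x0 l) -> continuity_pt f x0.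
Proof. move=> [l Hl]; exact: (derivable_continuous_pt f x0 (exist _ l Hl)). Qed.

Lemma pk_neq0 n x k : (forall m, (S m < n)%coq_nat -> x m < x (S m)) -> (k < n)%coq_nat ->
  pe n x (eqm k) (x k) <> 0.
Proof.
move=> Hx Hk; apply fprod_neq0 => m Hm; rewrite /eqm.
case: (Nat.eqb_spec m k) => [_|Hne]; first lra.
case: (Nat.lt_ge_cases m k) => H.
  have := inc_lt n x Hx m k H Hk; lra.
have := inc_lt n x Hx k m ltac:(lia) Hm; lra.
Qed.

Lemma roots_deriv n a x j k : is_ordered_roots n a x -> (j < n)%coq_nat -> (k < n)%coq_nat ->
  derivable_pt_lim (fun t => roots n (upd a j t) k) (a j) (- x k ^ j / pe n x (eqm k) (x k)).
Proof.
move=> Hx Hj Hk.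
have Hpk := pk_neq0 n x k (proj1 Hx) Hk.
pose g Y := - Y ^ j / pe n x (eqm k) Y.
have Hgc : continuity_pt g (x k).
  apply: continuity_pt_div => //.
    apply: continuity_pt_opp; apply cont_dl; exact: dl_pow.
  apply cont_dl; exact: pe_dl.
have Hpc : continuity_pt (fun Y => pe n x (eqm k) Y) (x k) by apply cont_dl; exact: pe_dl.
move=> eps Heps.
have [eta1 [Heta1 H1]] := cont_eps _ _ Hgc eps Heps.
have [eta2 [Heta2 H2]] := cont_eps _ _ Hpc (Rabs (pe n x (eqm k) (x k))) (Rabs_pos_lt _ Hpk).
have Heta : 0 < Rmin eta1 eta2 by apply Rmin_pos.
have [del [Hdel Hp]] := perturb n a x j Hx Hj _ Heta.
exists (mkposreal _ Hdel) => h Hh Hhd /=.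
have Ht : Rabs (a j + h - a j) < del by (have -> : a j + h - a j = h by ring).
have [Hr Hclose] := Hp _ Ht.
set zz := roots n (upd a j (a j + h)) k.
have Hz0 : roots n (upd a j (a j)) k = x k by rewrite upd_same; exact: roots_eq.
rewrite Hz0.
have Hzz : Rabs (zz - x k) < Rmin eta1 eta2 := Hclose k Hk.
have Hpz : pe n x (eqm k) zz <> 0.
  have := H2 zz ltac:(apply: Rlt_le_trans Hzz (Rmin_r _ _)).
  move=> H Hz; rewrite Hz in H; move: H; rewrite Rminus_0_l Rabs_Ropp; lra.
have Hroot : Peval n (upd a j (a j + h)) zz = 0.
  rewrite (Peval_pe _ _ _ Hr); exact: pe_root.
rewrite Peval_upd // (Peval_pe _ _ _ Hx) (pe_skip n x (fun _ => false) zz k Hk) // addm_ff in Hroot.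
have Heq : (zz - x k) / h = g zz.
  rewrite /g; field_simplify_eq => //.
  replace (a j + h - a j) with h in Hroot by ring.
  lra.
rewrite Heq.
apply H1; apply: Rlt_le_trans Hzz (Rmin_l _ _).
Qed.

Definition pk n x k := pe n x (eqm k) (x k).
Definition ww n x j k := - x k ^ j / pk n x k.

Lemma Z0_eq n a x j : is_ordered_roots n a x -> forall k, (k < n)%coq_nat -> roots n (upd a j (a j)) k = x k.
Proof. move=> Hx k Hk; rewrite upd_same; exact: roots_eq. Qed.

Lemma pd_lndiscr n a x j : is_ordered_roots n a x -> (j < n)%coq_nat ->
  pd (fun b => ln (discr n b)) a j =
  fsum n (fun q => fsum q (fun p => 2 * (ww n x j p - ww n x j q) / (x p - x q))).
Proof.
move=> Hx Hj; rewrite /pd; apply deriv1_eq.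
pose Z t := roots n (upd a j t).
have HZ0 : forall k, (k < n)%coq_nat -> Z (a j) k = x k by move=> k Hk; exact: Z0_eq.
have HZd : forall k, (k < n)%coq_nat -> derivable_pt_lim (fun t => Z t k) (a j) (ww n x j k).
  move=> k Hk; exact: roots_deriv.
have Hxne : forall p q, (p < q)%coq_nat -> (q < n)%coq_nat -> x p - x q <> 0.
  move=> p q Hpq Hq; have := inc_lt n x (proj1 Hx) p q Hpq Hq; lra.
pose F q t := fprod q (fun p => (Z t p - Z t q) ^ 2).
have HFd : forall q, (q < n)%coq_nat -> derivable_pt_lim (F q) (a j)
   (F q (a j) * fsum q (fun p => 2 * (ww n x j p - ww n x j q) / (x p - x q))).
  move=> q Hq.
  apply: dl_eq.
    apply: (fprod_deriv_log q (fun p t => (Z t p - Z t q) ^ 2)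
                (fun p => 2 * (x p - x q) * (ww n x j p - ww n x j q))).
      move=> p Hp.
      apply: (dl_ext _ (fun t => (Z t p - Z t q) * (Z t p - Z t q))); first by move=> t; ring.
      apply: dl_eq; first (apply dl_mult; apply dl_minus; apply HZd; lia).
      cbv beta; rewrite !HZ0; [ring|lia|lia].
    move=> p Hp; rewrite !HZ0; try lia.
    apply pow_nonzero; apply Hxne => //.
  congr (_ * _); apply fsum_ext => p Hp; rewrite !HZ0; try lia.
  field; apply Hxne => //.
have HFnz : forall q, (q < n)%coq_nat -> F q (a j) <> 0.
  move=> q Hq; apply fprod_neq0 => p Hp; rewrite !HZ0; try lia.
  apply pow_nonzero; apply Hxne => //.
have HDd := fprod_deriv_log n F _ (a j) HFd HFnz.
have HDpos : 0 < fprod n (fun q => F q (a j)).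
  apply fprod_pos => q Hq; apply fprod_pos => p Hp; rewrite !HZ0; try lia.
  have := Rsqr_pos_lt _ (Hxne p q Hp Hq); rewrite /Rsqr /=; lra.
apply: (dl_ext _ (comp ln (fun t => fprod n (fun q => F q t)))); first by move=> t; rewrite /comp /discr.
apply: dl_eq; first (apply: derivable_pt_lim_comp; [exact: HDd| exact: derivable_pt_lim_ln]).
have HD0 : fprod n (fun q => F q (a j)) <> 0 by lra.
rewrite -Rmult_assoc Rinv_l // Rmult_1_l.
apply fsum_ext => q Hq; field; exact: HFnz.
Qed.

Definition EE n x l i := cm n x (eqm l) i.
Definition dd n x l i j := fsum n (fun k => if eqm l k then 0 else - ww n x j k * cm n x (addm (eqm l) k) i).

Lemma pd_G n a x i j : is_ordered_roots n a x -> (j < n)%coq_nat ->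
  pd (fun b => G n i j b) a j =
  fsum n (fun l => dd n x l i j * EE n x l j + EE n x l i * dd n x l j j).
Proof.
move=> Hx Hj; rewrite /pd; apply deriv1_eq.
pose Z t := roots n (upd a j t).
have HZ0 : forall k, (k < n)%coq_nat -> Z (a j) k = x k by move=> k Hk; exact: Z0_eq.
have HZd : forall k, (k < n)%coq_nat -> derivable_pt_lim (fun t => Z t k) (a j) (ww n x j k).
  move=> k Hk; exact: roots_deriv.
apply: (dl_ext _ (fun t => fsum n (fun l => cm n (Z t) (eqm l) i * cm n (Z t) (eqm l) j))).
  by move=> t; rewrite G_formula.
apply: dl_eq.
  apply: (fsum_deriv n (fun l t => cm n (Z t) (eqm l) i * cm n (Z t) (eqm l) j)) => l Hl.
  apply: (dl_mult (fun t => cm n (Z t) (eqm l) i) (fun t => cm n (Z t) (eqm l) j)); [exact: (cm_deriv n Z (ww n x j) (eqm l) (a j) HZd i)| exact: (cm_deriv n Z (ww n x j) (eqm l) (a j) HZd j)].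
apply fsum_ext => l Hl.
have Hc : forall s m, cm n (Z (a j)) s m = cm n x s m by move=> s m; apply cm_ext_x.
rewrite /dd /EE !Hc.
congr (_ * _ + _ * _); apply fsum_ext => k Hk; by rewrite Hc.
Qed.

Definition cc n x k := fsum n (fun l => if Nat.eqb l k then 0 else 2 / (x k - x l)).
Definition FF n x l k i := cm n x (addm (eqm l) k) i.

Lemma xne n x : (forall m, (S m < n)%coq_nat -> x m < x (S m)) ->
  forall k l, (k < n)%coq_nat -> (l < n)%coq_nat -> k <> l -> x k - x l <> 0.
Proof.
move=> Hx k l Hk Hl Hne; case: (Nat.lt_ge_cases k l) => H.
  have := inc_lt n x Hx k l H Hl; lra.
have := inc_lt n x Hx l k ltac:(lia) Hk; lra.
Qed.

Lemma V1 n x k l : (k < n)%coq_nat -> (l < n)%coq_nat ->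
  fsum n (fun j => EE n x l j * x k ^ j) = if Nat.eqb k l then pk n x k else 0.
Proof.
move=> Hk Hl; rewrite /EE (cm_eval_lt n x (eqm l) (x k) l) //; last by rewrite /eqm Nat.eqb_refl.
case: (Nat.eqb_spec k l) => [->|Hne]; first by [].
apply: (fprod_zero _ _ k Hk); rewrite /eqm.
have -> : Nat.eqb k l = false by apply/Nat.eqb_neq.
ring.
Qed.

Lemma V2 n x k l : (k < n)%coq_nat -> (l < n)%coq_nat -> k <> l ->
  fsum n (fun j => FF n x l k j * x k ^ j) * (x k - x l) = pk n x k.
Proof.
move=> Hk Hl Hne; rewrite /FF (cm_eval_lt n x (addm (eqm l) k) (x k) l) //; last by rewrite /addm /eqm Nat.eqb_refl.
rewrite /pk (pe_skip n x (eqm k) (x k) l Hl); last by rewrite /eqm; apply/Nat.eqb_neq; lia.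
rewrite addm_comm; ring.
Qed.

Lemma V3 n x l X : (l < n)%coq_nat -> fsum n (fun i => X ^ i * EE n x l i) = pe n x (eqm l) X.
Proof.
move=> Hl; rewrite -(cm_eval_lt n x (eqm l) X l) //; last by rewrite /eqm Nat.eqb_refl.
apply fsum_ext => i _; rewrite /EE; ring.
Qed.

Lemma V4 n x l k X : (k < n)%coq_nat -> k <> l ->
  pe n x (eqm l) X = (X - x k) * pe n x (addm (eqm l) k) X.
Proof. move=> Hk Hne; apply pe_skip => //; rewrite /eqm; apply/Nat.eqb_neq; lia. Qed.

Lemma fsum_lt_split n q f : (q <= n)%coq_nat ->
  fsum q f = fsum n (fun p => if Nat.ltb p q then f p else 0).
Proof. exact: fsum_lt. Qed.

Lemma ifne_split k l (A : R) :
  (if Nat.eqb l k then 0 else A) = (if Nat.ltb k l then A else 0) + (if Nat.ltb l k then A else 0).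
Proof.
case: (Nat.eqb_spec l k) => [->|Hne]; first by rewrite Nat.ltb_irrefl; ring.
case: (Nat.ltb_spec k l) => H1; case: (Nat.ltb_spec l k) => H2; try lia; ring.
Qed.

Lemma Lj_eq n x (w : nat -> R) : (forall m, (S m < n)%coq_nat -> x m < x (S m)) ->
  fsum n (fun q => fsum q (fun p => 2 * (w p - w q) / (x p - x q))) =
  fsum n (fun k => w k * cc n x k).
Proof.
move=> Hx.
have Hne := xne n x Hx.
rewrite (fsum_ext n _ (fun q => fsum n (fun p => if Nat.ltb p q then 2 * (w p - w q) / (x p - x q) else 0))); last first.
  move=> q Hq; apply fsum_lt; lia.
rewrite (fsum_ext n (fun k => w k * cc n x k)
  (fun k => fsum n (fun l => (if Nat.ltb k l then 2 * w k / (x k - x l) else 0) +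
                            (if Nat.ltb l k then 2 * w k / (x k - x l) else 0)))); last first.
  move=> k Hk; rewrite /cc fsum_mull; apply fsum_ext => l Hl.
  rewrite -ifne_split; case: (Nat.eqb_spec l k) => _; [ring| rewrite /Rdiv; ring].
rewrite [RHS](fsum_ext n _ (fun k => fsum n (fun l => if Nat.ltb k l then 2 * w k / (x k - x l) else 0) +
  fsum n (fun l => if Nat.ltb l k then 2 * w k / (x k - x l) else 0))); last by move=> *; exact: fsum_add.
rewrite fsum_add.
rewrite (fsum_swap n n (fun k l => if Nat.ltb k l then 2 * w k / (x k - x l) else 0)).
rewrite -fsum_add; apply fsum_ext => q Hq; rewrite -fsum_add; apply fsum_ext => p Hp.
case: (Nat.ltb_spec p q) => H; last by ring.
field; split; apply Hne => //; lia.
Qed.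

Lemma fsum_swap3 n f : fsum n (fun a => fsum n (fun b => fsum n (fun c => f a b c))) =
  fsum n (fun b => fsum n (fun c => fsum n (fun a => f a b c))).
Proof.
rewrite (fsum_swap n n (fun a b => fsum n (fun c => f a b c))).
apply fsum_ext => b _; exact: fsum_swap.
Qed.

Section Alg.
Variable n : nat.
Variable x : nat -> R.
Hypothesis Hx : forall m, (S m < n)%coq_nat -> x m < x (S m).

Lemma sumE_w l k : (k < n)%coq_nat -> (l < n)%coq_nat ->
  fsum n (fun j => EE n x l j * - ww n x j k) = if Nat.eqb k l then 1 else 0.
Proof.
move=> Hk Hl.
have Hpk := pk_neq0 n x k Hx Hk.
rewrite (fsum_ext n _ (fun j => (EE n x l j * x k ^ j) * / pk n x k)); last first.
  by move=> j _; rewrite /ww /Rdiv; ring.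
rewrite -fsum_mulr V1 //; case: (Nat.eqb k l); [field|ring] => //.
Qed.

Lemma sumF_w l k : (k < n)%coq_nat -> (l < n)%coq_nat -> k <> l ->
  fsum n (fun j => FF n x l k j * - ww n x j k) = 1 / (x k - x l).
Proof.
move=> Hk Hl Hne.
have Hpk := pk_neq0 n x k Hx Hk.
have Hxx := xne n x Hx k l Hk Hl Hne.
rewrite (fsum_ext n _ (fun j => (FF n x l k j * x k ^ j) * / pk n x k)); last first.
  by move=> j _; rewrite /ww /Rdiv; ring.
rewrite -fsum_mulr -(V2 n x k l) //; field; split => //.
move=> H; apply Hpk; rewrite -/(pk n x k) -(V2 n x k l) // H; ring.
Qed.

Lemma lhs2 i : fsum n (fun j => fsum n (fun l => EE n x l i * EE n x l j) *
     fsum n (fun k => ww n x j k * cc n x k)) = - fsum n (fun l => EE n x l i * cc n x l).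
Proof.
rewrite (fsum_ext n _ (fun j => fsum n (fun l => fsum n (fun k =>
   - (EE n x l i * cc n x k) * (EE n x l j * - ww n x j k))))); last first.
  move=> j _; rewrite fsum_mulr; apply fsum_ext => l _; rewrite fsum_mull; apply fsum_ext => k _; ring.
rewrite fsum_swap3 -fsum_opp; apply fsum_ext => l Hl.
rewrite (fsum_ext n _ (fun k => - (EE n x l i * cc n x k) * fsum n (fun j => EE n x l j * - ww n x j k))); last first.
  by move=> k _; rewrite fsum_mull.
rewrite (fsum_ext n _ (fun k => if Nat.eqb k l then - (EE n x l i * cc n x k) else 0)); last first.
  move=> k Hk; rewrite sumE_w //; case: (Nat.eqb k l); ring.
exact: (fsum_delta n l (fun k => - (EE n x l i * cc n x k))).
Qed.

Lemma rhs2 i : fsum n (fun j => fsum n (fun l => dd n x l i j * EE n x l j + EE n x l i * dd n x l j j))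
  = - fsum n (fun l => EE n x l i * cc n x l) / 2.
Proof.
rewrite (fsum_ext n _ (fun j => fsum n (fun l => fsum n (fun k =>
   (if Nat.eqb k l then 0 else FF n x l k i) * (EE n x l j * - ww n x j k))) +
   fsum n (fun l => fsum n (fun k => EE n x l i * (if Nat.eqb k l then 0 else 1) *
      (FF n x l k j * - ww n x j k))))); last first.
  move=> j _; rewrite -fsum_add; apply fsum_ext => l _; rewrite /dd fsum_mulr fsum_mull -fsum_add -fsum_add.
  apply fsum_ext => k _; rewrite /FF /eqm; case: (Nat.eqb k l); ring.
rewrite fsum_add [X in X + _]fsum_swap3 [X in _ + X]fsum_swap3.
rewrite (fsum_zero n (fun l => fsum n (fun k => fsum n (fun j => _)))); last first.
  move=> l Hl; apply fsum_zero => k Hk; cbv beta; rewrite -fsum_mull sumE_w //.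
  case: (Nat.eqb k l); ring.
rewrite Rplus_0_l /Rdiv -fsum_opp fsum_mulr.
apply fsum_ext => l Hl.
rewrite (fsum_ext n _ (fun k => EE n x l i * (if Nat.eqb k l then 0 else 1 / (x k - x l)))); last first.
  move=> k Hk; rewrite -fsum_mull.
  case: (Nat.eqb_spec k l) => [_|Hne]; first ring.
  rewrite sumF_w //; ring.
rewrite -fsum_mull.
have -> : - (EE n x l i * cc n x l) * / 2 = EE n x l i * (- cc n x l * / 2) by ring.
congr (_ * _); rewrite /cc -fsum_opp fsum_mulr; apply fsum_ext => k Hk.
case: (Nat.eqb_spec k l) => [Hkl|Hne]; first by ring.
have := xne n x Hx k l Hk Hl Hne; move=> H.
field; split => //; move=> H2; apply H; lra.
Qed.
End Alg.

Lemma alg3 n x (Hx : forall m, (S m < n)%coq_nat -> x m < x (S m)) X :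
  fsum n (fun i => fsum n (fun j => X ^ i * fsum n (fun l => EE n x l i * EE n x l j) *
       fsum n (fun k => ww n x j k * cc n x k))) =
  - fsum n (fun l => fsum n (fun k => if Nat.eqb k l then 0 else pe n x (addm (eqm l) k) X)).
Proof.
rewrite (fsum_ext n _ (fun i => X ^ i * - fsum n (fun l => EE n x l i * cc n x l))); last first.
  move=> i _; rewrite -(lhs2 n x Hx i) fsum_mull; apply fsum_ext => j _; ring.
rewrite (fsum_ext n _ (fun i => - fsum n (fun l => cc n x l * (X ^ i * EE n x l i)))); last first.
  move=> i _; rewrite -fsum_opp fsum_mull -fsum_opp; apply fsum_ext => l _; ring.
rewrite fsum_opp fsum_swap; congr (- _).
rewrite (fsum_ext n _ (fun l => cc n x l * pe n x (eqm l) X)); last first.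
  by move=> l Hl; rewrite -fsum_mull V3.
pose h l k := if Nat.eqb k l then 0 else pe n x (eqm l) X / (x l - x k).
rewrite (fsum_ext n _ (fun l => fsum n (fun k => h l k) + fsum n (fun k => h l k))); last first.
  move=> l Hl; rewrite /cc fsum_mulr -fsum_add; apply fsum_ext => k Hk; rewrite /h.
  case: (Nat.eqb k l); rewrite /Rdiv; ring.
rewrite fsum_add [X in _ + X](fsum_swap n n h) -fsum_add.
apply fsum_ext => l Hl; rewrite -fsum_add; apply fsum_ext => k Hk; rewrite /h Nat.eqb_sym.
case: (Nat.eqb_spec l k) => [_|Hne]; first ring.
have Hne' : k <> l by lia.
rewrite (V4 n x l k X Hk Hne') (V4 n x k l X Hl Hne) addm_comm.
have := xne n x Hx l k Hl Hk Hne; move=> H.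
field; split => //; move=> H2; apply H; lra.
Qed.

Lemma Peval_deriv n a x (Hx : is_ordered_roots n a x) Y :
  derivable_pt_lim (Peval n a) Y (fsum n (fun l => pe n x (eqm l) Y)).
Proof.
apply: (dl_ext _ (fun Y => pe n x (fun _ => false) Y)); first exact: Peval_pe.
apply: dl_eq; first apply: (fprod_deriv n (fun m Y => if false then 1 else Y - x m) (fun _ => 1)).
  move=> m _; apply: dl_eq; first exact: (dl_minus _ _ _ _ _ (dl_id Y) (dl_const (x m) Y)). ring.
apply fsum_ext => l _; rewrite Rmult_1_l; apply fprod_ext => m _; rewrite /eqm.
by case: (Nat.eqb m l).
Qed.

Lemma Ppp n a x (Hx : is_ordered_roots n a x) X :
  deriv1 (deriv1 (Peval n a)) X =
  fsum n (fun l => fsum n (fun k => if Nat.eqb k l then 0 else pe n x (addm (eqm l) k) X)).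
Proof.
have -> : deriv1 (Peval n a) = (fun Y => fsum n (fun l => pe n x (eqm l) Y)).
  apply functional_extensionality => Y; apply deriv1_eq; exact: Peval_deriv.
apply deriv1_eq.
apply: (fsum_deriv n (fun l Y => pe n x (eqm l) Y)) => l Hl.
apply: dl_eq; first apply: (fprod_deriv n (fun m Y => if eqm l m then 1 else Y - x m)
    (fun m => if eqm l m then 0 else 1)).
  move=> m _; case: (eqm l m); first exact: dl_const.
  apply: dl_eq; first exact: (dl_minus _ _ _ _ _ (dl_id X) (dl_const (x m) X)). ring.
apply fsum_ext => k _; rewrite /eqm; case: (Nat.eqb k l); first ring.
rewrite Rmult_1_l; apply fprod_ext => m _; rewrite /addm /eqm.
by case: (Nat.eqb m k); case: (Nat.eqb m l).
Qed.

Lemma pow_m1 j : (-1) ^ j = ((-1) ^+ j)%R.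
Proof. elim: j => //= j ->. by rewrite GRing.exprS. Qed.

Lemma det_mx n M : det n M = (\det (\matrix_(i < n, j < n) M i j))%R.
Proof.
elim: n M => [|n IH] M; first by rewrite det_mx00.
change (det n.+1 M) with (fsum n.+1 (fun j => (-1)^j * M O j * det n (fun r c => M (S r) (if Nat.ltb c j then c else S c)))).
rewrite (expand_det_row _ ord0) fsum_big; apply: eq_bigr => j _.
rewrite /cofactor mxE IH pow_m1 add0n.
have -> : (\matrix_(i < n, j0 < n) M (S i) (if Nat.ltb j0 j then (j0 : nat) else S j0))%R
  = row' ord0 (col' j (\matrix_(i < n.+1, j0 < n.+1) M i j0)).
  apply/matrixP => r c; rewrite !mxE /= /bump /=.
  case: (Nat.ltb_spec c j) => H.
    have -> : (j <= c)%N = false by apply/negbTE; rewrite -ltnNge; apply/ltP.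
    by [].
  have -> : (j <= c)%N = true by apply/leP.
  by rewrite add1n.
by rewrite GRing.mulrCA GRing.mulrA.
Qed.

Lemma fprod_sq n f : (fprod n f) ^ 2 = fprod n (fun k => f k ^ 2).
Proof. rewrite /pow !Rmult_1_r fprod_mul; apply fprod_ext => k _; ring. Qed.
Lemma fprod_one m : fprod m (fun _ => 1) = 1.
Proof. elim: m => //= m ->; ring. Qed.
Lemma fprod_swap n m f : fprod n (fun i => fprod m (fun j => f i j)) = fprod m (fun j => fprod n (fun i => f i j)).
Proof.
elim: n => [|n IH] /=; first by rewrite fprod_one.
by rewrite IH fprod_mul.
Qed.
Lemma fprod_lt q n f : (q <= n)%coq_nat -> fprod q f = fprod n (fun p => if Nat.ltb p q then f p else 1).
Proof.
elim: n => [|n IH] Hq /=.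
  by have -> : q = O by lia.
case: (Nat.eq_dec q (S n)) => [->|Hne].
  have -> : Nat.ltb n (S n) = true by apply/Nat.ltb_lt; lia.
  rewrite (fprod_ext n (fun p => if Nat.ltb p (S n) then f p else 1) f) //.
  by move=> i Hi; have -> : Nat.ltb i (S n) = true by apply/Nat.ltb_lt; lia.
rewrite -IH; last lia.
have -> : Nat.ltb n q = false by apply/Nat.ltb_ge; lia.
ring.
Qed.

Lemma ltb_ssr i j : Nat.ltb i j = (i < j)%N.
Proof. case: (Nat.ltb_spec i j) => H; apply/esym; [apply/ltP | apply/negbTE; rewrite -leqNgt; apply/leP]; lia. Qed.
Lemma eqb_ssr i j : Nat.eqb i j = (i == j)%N.
Proof. case: (Nat.eqb_spec i j) => H; apply/esym; [by apply/eqP| apply/negbTE; apply/eqP; exact H]. Qed.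

Section Det.
Variable n : nat.
Variable a x : nat -> R.
Hypothesis Hx : is_ordered_roots n a x.

Definition DD := fprod n (fun q => fprod n (fun p => if Nat.ltb p q then (x p - x q) ^ 2 else 1)).

Lemma discr_eq : discr n a = DD.
Proof.
rewrite /discr /DD; apply fprod_ext => q Hq; rewrite (fprod_lt q n); last lia.
apply fprod_ext => p Hp; case: (Nat.ltb_spec p q) => H //.
by rewrite !(roots_eq n a x Hx) //; lia.
Qed.

Lemma DD_pos : 0 < DD.
Proof.
apply fprod_pos => q Hq; apply fprod_pos => p Hp; case: (Nat.ltb_spec p q) => H; last lra.
have := inc_lt n x (proj1 Hx) p q H Hq; move=> H2.
have : x p - x q <> 0 by lra.
move=> H3; have := Rsqr_pos_lt _ H3; rewrite /Rsqr /=; lra.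
Qed.

Definition Mx : 'M[R]_n := (\matrix_(l < n, i < n) EE n x l i)%R.
Definition Vm : 'M[R]_n := (\matrix_(k < n, j < n) (pow (x k) j))%R.

Lemma detG : det n (fun i j => fsum n (fun l => EE n x l i * EE n x l j)) = (\det Mx)%R * (\det Mx)%R.
Proof.
rewrite det_mx.
have -> : (\matrix_(i < n, j < n) fsum n (fun l => EE n x l i * EE n x l j))%R = (Mx^T *m Mx)%R.
  apply/matrixP => i j; rewrite !mxE fsum_big; apply: eq_bigr => l _; by rewrite !mxE.
by rewrite det_mulmx det_tr.
Qed.

Lemma VmMx : (Vm *m Mx^T)%R = diag_mx (\row_k pk n x k)%R.
Proof.
apply/matrixP => k l; rewrite !mxE.
rewrite (eq_bigr (fun j : 'I_n => EE n x l j * x k ^ j)); last first.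
  move=> j _; rewrite !mxE; exact: Rmult_comm.
rewrite -(fsum_big n (fun j => EE n x l j * x k ^ j)) V1; try (apply/ltP; exact: ltn_ord).
rewrite eqb_ssr -[(k == l :> nat)]/(k == l); case: (k == l); by rewrite ?GRing.mulr1n ?GRing.mulr0n.
Qed.
Lemma detVm : (\det Vm)%R = fprod n (fun i => fprod n (fun j => if Nat.ltb i j then x j - x i else 1)).
Proof.
have -> : Vm = ((Vandermonde n (\row_j x j))^T)%R.
  apply/matrixP => k j; rewrite !mxE pow_expr //.
rewrite det_tr det_Vandermonde fprod_big; apply: eq_bigr => i _.
rewrite fprod_big big_mkcond /=; apply: eq_bigr => j _.
by rewrite !mxE ltb_ssr; case: (i < j)%N.
Qed.

Lemma ifsq (b : bool) (v : R) : (if b then v else 1) ^ 2 = if b then v ^ 2 else 1.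
Proof. case: b => //; ring. Qed.

Lemma detVm_sq : (\det Vm)%R ^ 2 = DD.
Proof.
rewrite detVm fprod_sq /DD fprod_swap.
apply fprod_ext => i _; rewrite fprod_sq; apply fprod_ext => j _.
rewrite ifsq; case: (Nat.ltb i j) => //; ring.
Qed.

Lemma pk_split k : pk n x k = fprod n (fun l => if Nat.ltb l k then x k - x l else 1) *
  fprod n (fun l => if Nat.ltb k l then x k - x l else 1).
Proof.
rewrite fprod_mul /pk /pe; apply fprod_ext => l _; rewrite /eqm.
case: (Nat.eqb_spec l k) => [->|Hne].
  rewrite Nat.ltb_irrefl; ring.
case: (Nat.ltb_spec l k) => H1; case: (Nat.ltb_spec k l) => H2; try lia; ring.
Qed.

Lemma prodpk_sq : fprod n (pk n x) ^ 2 = DD * DD.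
Proof.
rewrite fprod_sq (fprod_ext n _ (fun k => fprod n (fun l => if Nat.ltb l k then (x k - x l) ^ 2 else 1) *
   fprod n (fun l => if Nat.ltb k l then (x k - x l) ^ 2 else 1))); last first.
  move=> k _; rewrite pk_split.
  have -> : forall u v : R, (u * v) ^ 2 = u ^ 2 * v ^ 2 by move=> u v; ring.
  rewrite !fprod_sq; congr (_ * _); apply fprod_ext => l _; by rewrite ifsq.
rewrite -fprod_mul; congr (_ * _).
  apply fprod_ext => q _; apply fprod_ext => p _; case: (Nat.ltb p q) => //; ring.
rewrite /DD fprod_swap //.
Qed.

Lemma det_main : det n (fun i j => fsum n (fun l => EE n x l i * EE n x l j)) = DD.
Proof.
rewrite detG.
have H1 : (\det Vm)%R * (\det Mx)%R = fprod n (pk n x).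
  have := congr1 determinant VmMx; rewrite det_mulmx det_tr det_diag => H.
  apply: (etrans H).
  rewrite fprod_big; apply: eq_bigr => k _; by rewrite mxE.
have H2 := detVm_sq.
have H3 := prodpk_sq.
have HD := DD_pos.
rewrite -H1 in H3.
have H4 : ((\det Mx)%R * (\det Mx)%R) * DD = DD * DD.
  rewrite -H3 -H2; ring.
apply: (Rmult_eq_reg_r DD) => //; lra.
Qed.
End Det.

Theorem mainTheorem4 (n : nat) (a : nat -> R) (Ha : inD n a) :
  discr n a = det n (fun i j => G n i j a) /\
  (forall i, (i < n)%coq_nat ->
     fsum n (fun j => G n i j a * pd (fun b => ln (discr n b)) a j)
     = 2 * fsum n (fun j => pd (fun b => G n i j b) a j)) /\
  (forall X : R,
     fsum n (fun i => fsum n (fun j =>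
        X ^ i * G n i j a * pd (fun b => ln (discr n b)) a j))
     = - deriv1 (deriv1 (Peval n a)) X).
Proof.
have [x Hx] := Ha.
have HGa : forall i j, G n i j a = fsum n (fun l => EE n x l i * EE n x l j).
  move=> i j; rewrite G_formula; apply fsum_ext => l _; rewrite /EE.
  by rewrite !(cm_ext_x n (roots n a) x) // => m Hm; apply roots_eq.
have HL : forall j, (j < n)%coq_nat ->
    pd (fun b => ln (discr n b)) a j = fsum n (fun k => ww n x j k * cc n x k).
  move=> j Hj; rewrite (pd_lndiscr n a x j Hx Hj); exact: Lj_eq (proj1 Hx).
split.
  rewrite (discr_eq n a x Hx).
  have -> : (fun i j => G n i j a) = (fun i j => fsum n (fun l => EE n x l i * EE n x l j)).
    apply functional_extensionality => i; apply functional_extensionality => j; exact: HGa.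
  by rewrite (det_main n a x Hx).
split.
  move=> i Hi.
  rewrite (fsum_ext n _ (fun j => fsum n (fun l => EE n x l i * EE n x l j) *
      fsum n (fun k => ww n x j k * cc n x k))); last by move=> j Hj; rewrite HGa HL.
  rewrite lhs2; last exact: (proj1 Hx).
  rewrite [X in 2 * X](fsum_ext n _ (fun j => fsum n (fun l => dd n x l i j * EE n x l j + EE n x l i * dd n x l j j)));
    last by move=> j Hj; rewrite (pd_G n a x i j Hx Hj).
  rewrite rhs2; last exact: (proj1 Hx).
  field.
move=> X.
rewrite (Ppp n a x Hx X) -(alg3 n x (proj1 Hx) X).
apply fsum_ext => i _; apply fsum_ext => j Hj; by rewrite HGa HL.
Qed.
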